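(* Let $X$ and $Y$ be nonempty boundedly compact metric spaces (all closed balls are compact) with $d_{GH}(X,Y)<\infty$. Then $d^{us}_{GH}(X,Y)=d_{GH}(X,Y)$.
   Context: For a metric space, $|xy|$ denotes distance. A set-valued map $f:X\rightrightarrows Y$ assigns to each $x\in X$ a nonempty $f(x)\subseteq Y$ and is identified with its graph. A correspondence between $X$ and $Y$ is a subset $R\subseteq X\times Y$ whose projections to $X$ and to $Y$ are both surjective, regarded as the set-valued map $x\mapsto R(x)=\{y:(x,y)\in R\}$; $R^{-1}=\{(y,x):(x,y)\in R\}$; $\mathcal R(X,Y)$ is the set of all correspondences. The distortion of a nonempty $\sigma\subseteq X\times Y$ is $\operatorname{dis}\sigma=\sup\{||xx'|-|yy'||:(x,y),(x',y')\in\sigma\}\in[0,\infty]$, and $d_{GH}(X,Y)=\frac12\inf\{\operatorname{dis}R:R\in\mathcal R(X,Y)\}$. A set-valued map $f$ is upper semicontinuous if for every $x$ and every open $U\supseteq f(x)$ there is a neighborhood $V$ of $x$ with $f(x')\subseteq U$ for all $x'\in V$. $\mathcal R_{us}(X,Y)$ is the set of $R\in\mathcal R(X,Y)$ with both $R$ and $R^{-1}$ upper semicontinuous, and $d^{us}_{GH}(X,Y)=\frac12\inf\{\operatorname{dis}R:R\in\mathcal R_{us}(X,Y)\}$. *)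

(* Defs.v *)
From Stdlib Require Import Reals List.
From Coquelicot Require Import Coquelicot.
Open Scope R_scope.

Record MetricSpace := {
  carrier :> Type;
  dist : carrier -> carrier -> R;
  dist_ge0 : forall x y, 0 <= dist x y;
  dist_eq0 : forall x y, dist x y = 0 <-> x = y;
  dist_sym : forall x y, dist x y = dist y x;
  dist_tri : forall x y z, dist x z <= dist x y + dist y z
}.

Arguments dist {m} _ _.

Definition open_set {X : MetricSpace} (U : X -> Prop) : Prop :=
  forall x, U x -> exists eps, 0 < eps /\ forall y, dist x y < eps -> U y.

Definition compact_set {X : MetricSpace} (K : X -> Prop) : Prop :=
  forall (I : Type) (U : I -> X -> Prop),
    (forall i, open_set (U i)) ->
    (forall x, K x -> exists i, U i x) ->
    exists l : list I, forall x, K x -> exists i, In i l /\ U i x.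

Definition closed_ball {X : MetricSpace} (x : X) (r : R) : X -> Prop :=
  fun y => dist x y <= r.

Definition boundedly_compact (X : MetricSpace) : Prop :=
  forall (x : X) (r : R), compact_set (closed_ball x r).

Definition correspondence {X Y : MetricSpace} (Rel : X -> Y -> Prop) : Prop :=
  (forall x, exists y, Rel x y) /\ (forall y, exists x, Rel x y).

Definition rel_inv {X Y : Type} (Rel : X -> Y -> Prop) : Y -> X -> Prop :=
  fun y x => Rel x y.

Definition upper_semicontinuous {X Y : MetricSpace} (f : X -> Y -> Prop) : Prop :=
  forall (x : X) (U : Y -> Prop),
    open_set U -> (forall y, f x y -> U y) ->
    exists eps, 0 < eps /\
      forall x', dist x x' < eps -> forall y, f x' y -> U y.

Definition distortion {X Y : MetricSpace} (s : X -> Y -> Prop) : Rbar :=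
  Lub_Rbar (fun v => exists x y x' y', s x y /\ s x' y' /\
                       v = Rabs (dist x x' - dist y y')).

(* Infimum of the distortions (values +oo contribute nothing; inf of the
   empty set is +oo). *)
Definition GH_dist (X Y : MetricSpace) : Rbar :=
  Rbar_mult (/ 2) (Glb_Rbar (fun r => exists Rel : X -> Y -> Prop,
     correspondence Rel /\ distortion Rel = Finite r)).

Definition GH_dist_us (X Y : MetricSpace) : Rbar :=
  Rbar_mult (/ 2) (Glb_Rbar (fun r => exists Rel : X -> Y -> Prop,
     correspondence Rel /\ upper_semicontinuous Rel /\
     upper_semicontinuous (rel_inv Rel) /\ distortion Rel = Finite r)).

(* Main.v *)
Require Import Defs.
From Stdlib Require Import Reals Lra List Classical.
From Coquelicot Require Import Coquelicot.
Open Scope R_scope.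

Definition clos {A B : MetricSpace} (Rl : A -> B -> Prop) : A -> B -> Prop :=
  fun a b => forall e, 0 < e -> exists a' b', Rl a' b' /\ Defs.dist a a' < e /\ Defs.dist b b' < e.

Lemma clos_incl {A B : MetricSpace} (Rl : A -> B -> Prop) a b : Rl a b -> clos Rl a b.
Proof.
  intros H e He. exists a, b. split; [exact H|].
  rewrite (proj2 (Defs.dist_eq0 _ a a) eq_refl), (proj2 (Defs.dist_eq0 _ b b) eq_refl). lra.
Qed.

Lemma dist4 (A : MetricSpace) (x x' a a' : A) :
  Rabs (Defs.dist x x' - Defs.dist a a') <= Defs.dist x a + Defs.dist x' a'.
Proof.
  pose proof (Defs.dist_tri A x a x'). pose proof (Defs.dist_tri A a a' x').
  pose proof (Defs.dist_tri A a x a'). pose proof (Defs.dist_tri A x x' a').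
  pose proof (Defs.dist_sym A x a). pose proof (Defs.dist_sym A x' a').
  apply Rabs_le. lra.
Qed.

Definition Sset {A B : MetricSpace} (s : A -> B -> Prop) : R -> Prop :=
  fun v => exists x y x' y', s x y /\ s x' y' /\ v = Rabs (Defs.dist x x' - Defs.dist y y').

Lemma dist_clos {A B : MetricSpace} (Rl : A -> B -> Prop) :
  distortion (clos Rl) = distortion Rl.
Proof.
  unfold distortion. fold (Sset (clos Rl)). fold (Sset Rl).
  destruct (Lub_Rbar_correct (Sset Rl)) as [ub1 lst1].
  destruct (Lub_Rbar_correct (Sset (clos Rl))) as [ub2 lst2].
  apply Rbar_le_antisym.
  - apply lst2. intros v Hv.
    assert (Happ : forall e, 0 < e -> exists w, Sset Rl w /\ v <= w + e).
    { intros e He. destruct Hv as (x & y & x' & y' & H1 & H2 & ->).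
      destruct (H1 (e/4)) as (a & b & Hab & Hxa & Hyb); [lra|].
      destruct (H2 (e/4)) as (a' & b' & Hab' & Hxa' & Hyb'); [lra|].
      exists (Rabs (Defs.dist a a' - Defs.dist b b')). split.
      + exists a, b, a', b'. auto.
      + pose proof (dist4 A x x' a a') as T1. pose proof (dist4 B y y' b b') as T2.
        pose proof (Rabs_triang (Defs.dist x x' - Defs.dist a a') (Defs.dist a a' - Defs.dist b b' + (Defs.dist b b' - Defs.dist y y'))) as T3.
        pose proof (Rabs_triang (Defs.dist a a' - Defs.dist b b') (Defs.dist b b' - Defs.dist y y')) as T4.
        rewrite Rabs_minus_sym with (x := Defs.dist b b') in T4.
        replace (Defs.dist x x' - Defs.dist a a' + (Defs.dist a a' - Defs.dist b b' + (Defs.dist b b' - Defs.dist y y')))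
          with (Defs.dist x x' - Defs.dist y y') in T3 by ring.
        lra. }
    destruct (Lub_Rbar (Sset Rl)) as [l| |] eqn:E; simpl; auto.
    + apply le_epsilon. intros e He. destruct (Happ e He) as (w & Hw & Hvw).
      specialize (ub1 w Hw). simpl in ub1. lra.
    + destruct (Happ 1 Rlt_0_1) as (w & Hw & _). specialize (ub1 w Hw). exact ub1.
  - apply lst1. intros v Hv. apply ub2.
    destruct Hv as (x & y & x' & y' & H1 & H2 & ->).
    exists x, y, x', y'. repeat split; auto; apply clos_incl; auto.
Qed.

Lemma list_min {T : Type} (f : T -> R) (l : list T) :
  (forall t, 0 < f t) -> exists d, 0 < d /\ forall t, In t l -> d <= f t.
Proof.
  intros Hp. induction l as [|t l IH].
  - exists 1. split; [lra|]. intros t [].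
  - destruct IH as (d & Hd & Hl). exists (Rmin d (f t)). split.
    + apply Rmin_pos; auto.
    + intros s [<-|Hs].
      * apply Rmin_r.
      * eapply Rle_trans; [apply Rmin_l|auto].
Qed.

Lemma ball_open {B : MetricSpace} (z : B) (r : R) : @Defs.open_set B (fun y : B => Defs.dist z y < r).
Proof.
  intros y Hy. exists (r - Defs.dist z y). split; [lra|].
  intros w Hw. pose proof (Defs.dist_tri B z y w). lra.
Qed.

Lemma dist_bound {A B : MetricSpace} (Rl : A -> B -> Prop) r :
  distortion Rl = Finite r -> forall x y x' y', Rl x y -> Rl x' y' ->
  Rabs (Defs.dist x x' - Defs.dist y y') <= r.
Proof.
  intros Hd x y x' y' H1 H2.
  destruct (Lub_Rbar_correct (Sset Rl)) as [ub _].
  unfold distortion in Hd. fold (Sset Rl) in Hd. rewrite Hd in ub.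
  apply (ub (Rabs (Defs.dist x x' - Defs.dist y y'))).
  exists x, y, x', y'. auto.
Qed.

Lemma usc_clos {A B : MetricSpace} (cB : boundedly_compact B) (Rl : A -> B -> Prop) r
  (hd : distortion Rl = Finite r) (hc : forall a, exists b, Rl a b) :
  upper_semicontinuous (clos Rl).
Proof.
  intros x U HU Hsub.
  destruct (hc x) as [y0 Hy0].
  pose (I := option {p : B * R | 0 < snd p /\ forall a b, Rl a b ->
              ~ (Defs.dist x a < snd p /\ Defs.dist (fst p) b < snd p)}).
  pose (V := fun i : I => match i with None => U
            | Some p => fun y => Defs.dist (fst (proj1_sig p)) y < snd (proj1_sig p) / 2 end).
  destruct (cB y0 (r + 1) I V) as [l Hl].
  - intros [p|]; simpl; [apply ball_open|exact HU].
  - intros y Hy. destruct (classic (U y)) as [Uy|nUy].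
    + exists None. exact Uy.
    + assert (nc : ~ clos Rl x y) by (intro C; apply nUy; auto).
      unfold clos in nc.
      apply not_all_ex_not in nc. destruct nc as [e He].
      apply imply_to_and in He. destruct He as [He Hn].
      assert (P : 0 < snd (y, e) /\ forall a b, Rl a b ->
              ~ (Defs.dist x a < snd (y, e) /\ Defs.dist (fst (y, e)) b < snd (y, e))).
      { simpl. split; auto. intros a b Hab [h1 h2]. apply Hn. exists a, b. auto. }
      exists (Some (exist _ (y, e) P)). simpl.
      rewrite (proj2 (Defs.dist_eq0 _ y y) eq_refl). lra.
  - destruct (list_min (fun i : I => match i with None => 1
            | Some p => snd (proj1_sig p) end) l) as (d & Hd & Hdl).
    { intros [p|]; simpl; [apply (proj1 (proj2_sig p))|lra]. }
    exists (Rmin 1 (d / 2)). split; [apply Rmin_pos; lra|].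
    intros x' Hx' y' Hy'.
    pose proof (Rmin_l 1 (d/2)). pose proof (Rmin_r 1 (d/2)).
    destruct (classic (U y')) as [Uy|nUy]; auto. exfalso.
    assert (Ky : closed_ball y0 (r + 1) y').
    { unfold closed_ball. apply le_epsilon. intros e He.
      destruct (Hy' (e/2)) as (a & b & Hab & Ha & Hb); [lra|].
      pose proof (dist_bound Rl r hd x y0 a b Hy0 Hab) as Hr.
      apply Rabs_le_between in Hr.
      pose proof (Defs.dist_tri A x x' a). pose proof (Defs.dist_tri B y0 b y').
      pose proof (Defs.dist_sym B b y'). lra. }
    destruct (Hl y' Ky) as (i & Hi & HV).
    destruct i as [[[z e] [He Hn]]|]; simpl in HV; [|contradiction].
    specialize (Hdl _ Hi). simpl in Hdl.
    destruct (Hy' (d/2)) as (a & b & Hab & Ha & Hb); [lra|].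
    apply (Hn a b Hab). simpl.
    pose proof (Defs.dist_tri A x x' a). pose proof (Defs.dist_tri B z y' b).
    split; lra.
Qed.

Lemma dist_inv {A B : MetricSpace} (Rl : A -> B -> Prop) :
  distortion (rel_inv Rl) = distortion Rl.
Proof.
  unfold distortion. apply Lub_Rbar_eqset. intros v. split.
  - intros (y & x & y' & x' & H1 & H2 & ->). exists x, y, x', y'.
    repeat split; auto. apply Rabs_minus_sym.
  - intros (x & y & x' & y' & H1 & H2 & ->). exists y, x, y', x'.
    repeat split; auto. apply Rabs_minus_sym.
Qed.


Lemma usc_inv_clos {A B : MetricSpace} (Rl : A -> B -> Prop) :
  upper_semicontinuous (clos (rel_inv Rl)) -> upper_semicontinuous (rel_inv (clos Rl)).
Proof.
  assert (E : forall b a, rel_inv (clos Rl) b a <-> clos (rel_inv Rl) b a).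
  { intros b a. unfold rel_inv, clos. split.
    - intros H e He. destruct (H e He) as (a' & b' & h1 & h2 & h3). exists b', a'. auto.
    - intros H e He. destruct (H e He) as (b' & a' & h1 & h2 & h3). exists a', b'. auto. }
  intros HF x U HU Hsub.
  destruct (HF x U HU) as (e & He & H).
  - intros y Hy. apply Hsub, E, Hy.
  - exists e. split; auto. intros x' Hx' y Hy. apply (H x' Hx'), E, Hy.
Qed.

Theorem mainTheorem9 (X Y : MetricSpace)
  (hX : inhabited (carrier X)) (hY : inhabited (carrier Y))
  (cX : boundedly_compact X) (cY : boundedly_compact Y)
  (hfin : is_finite (GH_dist X Y)) :
  GH_dist_us X Y = GH_dist X Y.
Proof.
  unfold GH_dist_us, GH_dist. f_equal. apply Glb_Rbar_eqset. intros r. split.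
  - intros (Rel & c & _ & _ & d). exists Rel. auto.
  - intros (Rel & [c1 c2] & d). exists (clos Rel). repeat split.
    + intros x. destruct (c1 x) as [y Hy]. exists y. apply clos_incl, Hy.
    + intros y. destruct (c2 y) as [x Hx]. exists x. apply clos_incl, Hx.
    + exact (usc_clos cY Rel r d c1).
    + apply usc_inv_clos. apply (usc_clos cX (rel_inv Rel) r).
      * rewrite dist_inv. exact d.
      * exact c2.
    + rewrite dist_clos. exact d.
Qed.
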